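(* Let $G$ be a finite simple graph, $e$ an edge of $G$, $G' = G - e$, and $c$ an acyclic edge coloring of $G'$. Let $u,i,j,a,b$ be vertices with $ui, uj \in E(G')$ and $ab \in E(G)$, and let $\alpha \neq \beta$ be colors with $\{\alpha,\beta\} \cap \{c(u,i),c(u,j)\} \neq \emptyset$ and $\{i,j\} \cap \{a,b\} = \emptyset$. Suppose that, with respect to $c$, there exists an $(\alpha,\beta,ab)$-critical path in $G'$ passing through the vertex $u$. Let $c'$ be the coloring of $G'$ obtained from $c$ by exchanging the colors of $ui$ and $uj$ (i.e. $c'(u,i)=c(u,j)$, $c'(u,j)=c(u,i)$, and $c'(f)=c(f)$ for all other edges $f$), and suppose $c'$ is a proper edge coloring. Then with respect to $c'$ there is no $(\alpha,\beta,ab)$-critical path in $G'$.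
   Context: An edge coloring is proper if adjacent edges get different colors, and acyclic if it is proper and there is no cycle whose edges use only two colors. An $(\alpha,\beta)$-maximal bichromatic path is a path whose edges are colored alternately $\alpha$ and $\beta$ and which cannot be extended at either end by an edge of color $\alpha$ or $\beta$. For vertices $a,b$, an $(\alpha,\beta,ab)$-critical path (with respect to a given coloring of $G'$) is an $(\alpha,\beta)$-maximal bichromatic path in $G'$ that starts at $a$ with an edge colored $\alpha$ and ends at $b$ with an edge colored $\alpha$. *)

(* Defs.v *)
From mathcomp Require Import all_boot.
Set Implicit Arguments. Unset Strict Implicit. Unset Printing Implicit Defensive.

Definition simple_graph (T : finType) (adj : rel T) : Prop :=
  symmetric adj /\ irreflexive adj.

Definition del_edge (T : finType) (adj : rel T) (x y : T) : rel T :=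
  fun v w => adj v w && ([set v; w] != [set x; y]).

(* An edge coloring assigns a color (a nat) to each edge {v,w}, encoded
   as the 2-element set [set v; w]; only values on edges matter. *)
Definition ecoloring (T : finType) := {set T} -> nat.

Definition proper_ecoloring (T : finType) (adj : rel T) (c : ecoloring T) : Prop :=
  forall v w1 w2, adj v w1 -> adj v w2 -> w1 != w2 ->
    c [set v; w1] != c [set v; w2].

(* A cycle: distinct vertices s_0,...,s_{k-1}, k >= 3, consecutive ones
   (cyclically) adjacent.  Its edges are zip s (rot 1 s). *)
Definition graph_cycle (T : finType) (adj : rel T) (s : seq T) : Prop :=
  3 <= size s /\ uniq s /\ cycle adj s.

Definition acyclic_ecoloring (T : finType) (adj : rel T) (c : ecoloring T) : Prop :=
  proper_ecoloring adj c /\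
  forall (s : seq T) (al be : nat), graph_cycle adj s ->
    ~ all (fun p : T * T => c [set p.1; p.2] \in [:: al; be]) (zip s (rot 1 s)).

(* (al,be,ab)-critical path: the path a :: q (distinct vertices, consecutive
   ones adjacent, at least one edge) from a to b whose k-th edge
   (0-indexed) has color al for even k and be for odd k, whose first and
   last edges have color al, and which is maximal: at each end, the only
   incident edge of color al or be is the path edge at that end. *)
Definition critical_path (T : finType) (adj : rel T) (c : ecoloring T)
    (al be : nat) (a b : T) (q : seq T) : Prop :=
  [/\ q != [::], uniq (a :: q), path adj a q & last a q = b] /\
  [/\ (forall k, k < size q ->
         c [set nth a (a :: q) k; nth a q k] = if odd k then be else al),
      c [set a; head a q] = al,
      c [set nth a (a :: q) (size q).-1; b] = al,
      (forall w, adj a w -> c [set a; w] \in [:: al; be] -> w = head a q) &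
      (forall w, adj b w -> c [set b; w] \in [:: al; be] ->
         w = nth a (a :: q) (size q).-1)].

Definition swap_colors (T : finType) (c : ecoloring T) (u i j : T) : ecoloring T :=
  fun E => if E == [set u; i] then c [set u; j]
           else if E == [set u; j] then c [set u; i]
           else c E.

(* Main.v *)
Require Import Defs.
From mathcomp Require Import all_boot.
Set Implicit Arguments. Unset Strict Implicit. Unset Printing Implicit Defensive.

Definition col (al be : nat) (k : nat) := if odd k then be else al.

Lemma col_in al be k : col al be k \in [:: al; be].
Proof. by rewrite /col; case: (odd k); rewrite !inE eqxx ?orbT. Qed.

Lemma col_cases al be k x : x \in [:: al; be] -> x = col al be k \/ x = col al be k.+1.
Proof. rewrite /col /= !inE; case: (odd k) => /= /orP [] /eqP ->; auto. Qed.

Lemma two_vals (al be x y z : nat) : x \in [::al;be] -> y \in [::al;be] -> z \in [::al;be] ->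
  x != y -> z != y -> x = z.
Proof.
rewrite !inE => /orP[]/eqP-> /orP[]/eqP-> /orP[]/eqP-> //; rewrite ?eqxx //.
Qed.

Lemma set2_neq (T : finType) (x y z w : T) : x \notin [set z; w] -> [set x; y] != [set z; w].
Proof. by apply: contra => /eqP <-; rewrite !inE eqxx. Qed.

Lemma crit_edge (T : finType) (E : rel T) c al be a b q : critical_path E c al be a b q ->
  forall k, k < size q -> E (nth a (a :: q) k) (nth a (a :: q) k.+1) /\
     c [set nth a (a :: q) k; nth a (a :: q) k.+1] = col al be k.
Proof.
case=> [[_ _ Hp _] [Hc _ _ _ _]] k Hk; split; last exact: Hc.
by move/(pathP a): Hp => /(_ k Hk).
Qed.

Lemma crit_last (T : finType) (E : rel T) c al be a b q : critical_path E c al be a b q ->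
  nth a (a :: q) (size q) = b.
Proof. by case=> [[_ _ _ Hl] _]; rewrite -Hl; exact: (nth_last a (a :: q)). Qed.

Lemma crit_close (T : finType) (E : rel T) c al be a b q : symmetric E -> proper_ecoloring E c ->
  critical_path E c al be a b q -> forall k w, k <= size q -> E (nth a (a::q) k) w ->
  c [set nth a (a::q) k; w] \in [:: al; be] ->
  exists2 r, r < size q &
   ((nth a (a::q) r == nth a (a::q) k) && (nth a (a::q) r.+1 == w)) ||
   ((nth a (a::q) r == w) && (nth a (a::q) r.+1 == nth a (a::q) k)).
Proof.
move=> sE pc H; have He := crit_edge H; have Hb := crit_last H.
case: H => [[qn uq Hp Hl] [Hc Ha Hb' mA mB]] k w Hk Ew Cw.
have n0 : 0 < size q by case: (q) qn.
case: k Hk Ew Cw => [|k] Hk Ew Cw.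
  exists 0; first done.
  by rewrite /= eqxx (mA w Ew Cw) nth0 eqxx.
case: (eqVneq k.+1 (size q)) => [ek|nk].
  rewrite ek Hb in Ew Cw.
  exists k; first by rewrite ek.
  have := mB w Ew Cw; rewrite -ek /= => ->.
  by rewrite !eqxx orbT.
have lt : k.+1 < size q by rewrite ltn_neqAle nk Hk.
case: (col_cases k Cw) => ec.
  have [E1 C1] := He k (ltnW lt).
  exists k; first exact: ltnW.
  apply/orP; right; rewrite eqxx andbT.
  case: (eqVneq w (nth a (a::q) k)) => [//|nw].
  have E1' : E (nth a (a::q) k.+1) (nth a (a::q) k) by rewrite sE.
  have := pc _ _ _ Ew E1' nw.
  by rewrite ec setUC C1 eqxx.
have [E1 C1] := He k.+1 lt.
exists k.+1 => //.
apply/orP; left; rewrite eqxx /=.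
case: (eqVneq w (nth a q k.+1)) => [//|nw].
have := pc _ _ _ Ew E1 nw.
by rewrite ec C1 eqxx.
Qed.

Lemma crit_close_mem (T : finType) (E : rel T) c al be a b q : symmetric E -> proper_ecoloring E c ->
  critical_path E c al be a b q -> forall v w, v \in a :: q -> E v w ->
  c [set v; w] \in [:: al; be] -> w \in a :: q.
Proof.
move=> sE pc H v w vin Ew Cw.
have ks : index v (a :: q) <= size q by have := vin; rewrite -index_mem.
have e : nth a (a :: q) (index v (a :: q)) = v by rewrite nth_index.
rewrite -e in Ew Cw.
have [r rl /orP[/andP[_ /eqP <-]|/andP[/eqP <- _]]] :=
  crit_close sE pc H ks Ew Cw.
  by apply: mem_nth.
by apply: mem_nth; rewrite /= ltnS ltnW.
Qed.

Lemma crit_both (T : finType) (E : rel T) c al be a b q : symmetric E ->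
  critical_path E c al be a b q ->
  forall l x, 0 < l < size q -> x \in [:: al; be] ->
  exists w, E (nth a (a::q) l) w /\ c [set nth a (a::q) l; w] = x.
Proof.
move=> sE H [|l] x //= lt xin.
have He := crit_edge H.
case: (col_cases l xin) => ->.
  have [E1 C1] := He l (ltnW lt).
  by exists (nth a (a::q) l); split; [rewrite sE | rewrite setUC].
have [E1 C1] := He l.+1 lt.
by exists (nth a (a::q) l.+2).
Qed.

Lemma take_uniq_lt (T : eqType) (s : seq T) x0 k t : uniq s -> k < size s ->
  nth x0 s k \in take t s -> k < t.
Proof. by move=> us ks /index_ltn; rewrite index_uniq. Qed.
Lemma main (T : finType) (E : rel T) (c c' : ecoloring T) (u i j a b : T) (al be : nat) q :
  symmetric E -> irreflexive E -> proper_ecoloring E c -> proper_ecoloring E c' ->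
  c' [set u; i] = c [set u; j] -> c' [set u; j] = c [set u; i] ->
  (forall F, F != [set u; i] -> F != [set u; j] -> c' F = c F) ->
  E u i -> E u j -> i != j -> al != be -> c [set u; i] \in [:: al; be] ->
  i != a -> i != b -> j != a -> j != b ->
  critical_path E c al be a b q -> u \in a :: q ->
  ~ exists q', critical_path E c' al be a b q'.
Proof.
move=> sE iE pc pc' h1 h2 h3 Eui Euj nij nab Cui nia nib nja njb H uin [q' H'].
have He := crit_edge H; have He' := crit_edge H'.
have Hcl := crit_close sE pc H; have Hm := crit_close_mem sE pc H.
have Hboth := crit_both sE H.
have nb := crit_last H; have nb' := crit_last H'.
case: (H) => [[qn uq Hp Hl] _]; case: (H') => [[qn' uq' Hp' Hl'] _].
have neq_of : forall v w, E v w -> v != w.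
  by move=> v w; apply: contraTneq => ->; rewrite iE.
have nui := neq_of _ _ Eui; have nuj := neq_of _ _ Euj.
have interior : forall v, v \in a :: q -> v != a -> v != b ->
    0 < index v (a :: q) < size q.
  move=> v vin va vb.
  have le : index v (a :: q) <= size q by have := vin; rewrite -index_mem.
  rewrite lt0n (ltn_neqAle _ (size q)) le andbT; apply/andP; split.
    by apply: contraNneq va => e; rewrite -(nth_index a vin) e.
  by apply: contraNneq vb => e; rewrite -(nth_index a vin) e nb.
have iin : i \in a :: q by apply: (Hm u).
have [x [xin xne]] : exists x, x \in [:: al; be] /\ x != c [set u; i].
  move: Cui; rewrite !inE => /orP[] /eqP ->.
    by exists be; rewrite !inE eqxx orbT eq_sym.
  by exists al; rewrite !inE eqxx.
have [w [Eiw Ciw]] : exists w, E i w /\ c [set i; w] = x.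
  by move: (Hboth _ x (interior i iin nia nib) xin); rewrite (nth_index a iin).
have nwu : w != u.
  by apply: contraNneq xne => e; rewrite -Ciw e setUC.
have niw := neq_of _ _ Eiw.
case: (boolP (c [set u; j] \in [:: al; be])) => Cuj.
  have nji : j != i by rewrite eq_sym.
  have cne : c [set u; j] != c [set u; i] := pc _ _ _ Euj Eui nji.
  have ex := two_vals Cuj Cui xin cne xne.
  have Eiu : E i u by rewrite sE.
  have nuw : u != w by rewrite eq_sym.
  have := pc' i u w Eiu Eiw nuw.
  rewrite setUC h1 h3.
    by rewrite ex Ciw eqxx.
    by rewrite setUC; apply: set2_neq; rewrite !inE negb_or nwu eq_sym niw.
  by apply: set2_neq; rewrite !inE negb_or eq_sym nui.
have Cuj' : c' [set u; i] \notin [:: al; be] by rewrite h1.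
have ku : index u (a :: q) <= size q by have := uin; rewrite -index_mem.
have eu : nth a (a :: q) (index u (a :: q)) = u by rewrite nth_index.
have Eui' := Eui; have Cui' := Cui; rewrite -eu in Eui' Cui'.
have [r rl hr] := Hcl _ _ ku Eui' Cui'.
rewrite eu in hr.
have hset : [set nth a (a::q) r; nth a (a::q) r.+1] = [set u; i].
  by case/orP: hr => /andP[/eqP -> /eqP ->] //; rewrite setUC.
have jnot : j \notin a :: q.
  apply/negP => jin.
  have [w2 [Ejw Cjw]] : exists w2, E j w2 /\ c [set j; w2] = c [set u; i].
    by move: (Hboth _ _ (interior j jin nja njb) Cui); rewrite (nth_index a jin).
  have nw2u : w2 != u by apply: contraNneq Cuj => e; rewrite setUC -e Cjw.
  have Eju : E j u by rewrite sE.
  have nuw2 : u != w2 by rewrite eq_sym.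
  have := pc' j u w2 Eju Ejw nuw2.
  rewrite setUC h2 h3.
    by rewrite Cjw eqxx.
    by apply: set2_neq; rewrite !inE negb_or eq_sym nuj eq_sym nij.
  by rewrite setUC; apply: set2_neq; rewrite !inE negb_or nw2u eq_sym (neq_of _ _ Ejw).
have inv : forall t, t <= size q' ->
  (t <= r /\ nth a (a :: q') t = nth a (a :: q) t) \/
  (nth a (a :: q') t \notin a :: q /\ u \in take t (a :: q')).
  elim=> [|t IH] Ht; first by left.
  have [Et Ct] := He' t Ht.
  have Ht' : t < size (a :: q') by apply: ltnW.
  have nui2 : [set nth a (a::q') t; nth a (a::q') t.+1] != [set u; i].
    by apply: contraNneq Cuj' => e; rewrite -e Ct col_in.
  case: (IH (ltnW Ht)) => [[tr ey]|[ynot uint]].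
  - case: (eqVneq [set nth a (a::q') t; nth a (a::q') t.+1] [set u; j]) => [e|nuj2].
    + right.
      have yin : nth a (a::q') t \in a :: q.
        by rewrite ey; apply: mem_nth; rewrite /= ltnS; exact: leq_trans tr (ltnW rl).
      have : nth a (a::q') t \in [set u; j] by rewrite -e !inE eqxx.
      rewrite in_set2 => /orP[/eqP yu|/eqP yj]; last by move: jnot; rewrite -yj yin.
      have : nth a (a::q') t.+1 \in [set u; j] by rewrite -e !inE eqxx orbT.
      rewrite in_set2 => /orP[/eqP y'u|/eqP y'j].
        by move: Et; rewrite yu y'u iE.
      split; first by rewrite y'j.
      by rewrite (take_nth a Ht') mem_rcons inE yu eqxx.
    + have Cc : c [set nth a (a::q') t; nth a (a::q') t.+1] = col al be t by rewrite -h3.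
      have [Ep Cp] := He t (leq_ltn_trans tr rl).
      have Et2 := Et; rewrite ey in Et2.
      have ey' : nth a (a::q') t.+1 = nth a (a::q) t.+1.
        case: (eqVneq (nth a (a::q') t.+1) (nth a (a::q) t.+1)) => [//|ne].
        by have := pc _ _ _ Et2 Ep ne; rewrite Cp -ey Cc eqxx.
      case: (ltnP t r) => [ltr|ler]; first by left.
      have etr : t = r by apply/eqP; rewrite eqn_leq tr ler.
      by move: nui2; rewrite ey ey' etr hset eqxx.
  - case: (eqVneq [set nth a (a::q') t; nth a (a::q') t.+1] [set u; j]) => [e|nuj2].
    + have : nth a (a::q') t \in [set u; j] by rewrite -e !inE eqxx.
      rewrite in_set2 => /orP[/eqP yu|/eqP yj]; first by move: ynot; rewrite yu uin.
      have : nth a (a::q') t.+1 \in [set u; j] by rewrite -e !inE eqxx orbT.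
      rewrite in_set2 => /orP[/eqP y'u|/eqP y'j]; last by move: Et; rewrite yj y'j iE.
      have Ht2 : t.+1 < size (a :: q') by [].
      rewrite -y'u in uint.
      by have := take_uniq_lt uq' Ht2 uint; rewrite ltnNge leqnSn.
    + have Cc : c [set nth a (a::q') t; nth a (a::q') t.+1] = col al be t by rewrite -h3.
      right; split.
        apply/negP => y'in.
        have Ey : E (nth a (a::q') t.+1) (nth a (a::q') t) by rewrite sE.
        have Cy : c [set nth a (a::q') t.+1; nth a (a::q') t] \in [:: al; be].
          by rewrite setUC Cc col_in.
        by move: ynot; rewrite (Hm _ _ y'in Ey Cy).
      by rewrite (take_nth a Ht') mem_rcons inE uint orbT.
case: (inv _ (leqnn (size q'))) => [[le eb]|[bnot _]].
  rewrite nb' in eb.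
  have lt1 : size q' < size (a :: q) by rewrite /= ltnS (leq_trans le (ltnW rl)).
  have lt2 : size q < size (a :: q) by [].
  have : nth a (a::q) (size q') == nth a (a::q) (size q) by rewrite -eb nb.
  rewrite nth_uniq // => /eqP e.
  by move: rl; rewrite -e ltnNge le.
by move: bnot; rewrite nb' -nb mem_nth.
Qed.

Theorem lemma2 (T : finType) (adj : rel T) (x y : T) (c : ecoloring T)
    (u i j a b : T) (al be : nat) :
  simple_graph adj ->
  adj x y ->
  acyclic_ecoloring (del_edge adj x y) c ->
  del_edge adj x y u i -> del_edge adj x y u j -> i != j ->
  adj a b ->
  al != be ->
  (c [set u; i] \in [:: al; be]) || (c [set u; j] \in [:: al; be]) ->
  [&& i != a, i != b, j != a & j != b] ->
  (exists q, critical_path (del_edge adj x y) c al be a b q /\ u \in a :: q) ->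
  proper_ecoloring (del_edge adj x y) (swap_colors c u i j) ->
  ~ exists q, critical_path (del_edge adj x y) (swap_colors c u i j) al be a b q.
Proof.
move=> [sadj iadj] _ [pc _] Eui Euj nij _ nab Cuv /and4P[nia nib nja njb] [q [H uin]] pc'.
have sE : symmetric (del_edge adj x y).
  by move=> v w; rewrite /del_edge sadj setUC.
have iE : irreflexive (del_edge adj x y) by move=> v; rewrite /del_edge iadj.
have nui : u != i by apply: contraTneq Eui => ->; rewrite iE.
have nuj : u != j by apply: contraTneq Euj => ->; rewrite iE.
have nset : [set u; j] != [set u; i].
  rewrite setUC; apply: set2_neq; rewrite in_set2 negb_or eq_sym nuj /=.
  by rewrite eq_sym.
have h1 : swap_colors c u i j [set u; i] = c [set u; j] by rewrite /swap_colors eqxx.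
have h2 : swap_colors c u i j [set u; j] = c [set u; i].
  by rewrite /swap_colors (negbTE nset) eqxx.
have h3 : forall F, F != [set u; i] -> F != [set u; j] -> swap_colors c u i j F = c F.
  by move=> F n1 n2; rewrite /swap_colors (negbTE n1) (negbTE n2).
case/orP: Cuv => C.
  exact: (main sE iE pc pc' h1 h2 h3 Eui Euj nij nab C nia nib nja njb H uin).
have nji : j != i by rewrite eq_sym.
have h3' : forall F, F != [set u; j] -> F != [set u; i] -> swap_colors c u i j F = c F.
  by move=> F n1 n2; apply: h3.
exact: (main sE iE pc pc' h2 h1 h3' Euj Eui nji nab C nja njb nia nib H uin).
Qed.
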